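(* Let $\gamma:[0,1]\to\mathbb{R}^2$ be a $C^1$ curve of constant speed $c>0$ which is not closed ($\gamma(0)\neq\gamma(1)$), whose turning angle function $\theta$ satisfies $\theta(1)-\theta(0)=2\pi m$ with $0\neq m\in\mathbb{Z}$. Let $k\ge 3$ and $\sigma\in S_k$. Then there exist cuts $C\in\operatorname{int}(D_k)$ such that the rearranged curve $r_{\sigma,C}$ is a closed $C^1$ curve if and only if $\sigma\in S_k\setminus Z_k$, i.e. $\sigma$ is not a cyclic shift.
   Context: A turning angle function is a continuous $\theta$ with $\gamma'(s)=c(\cos\theta(s),\sin\theta(s))$. Concatenation $\alpha*\beta$ of two $C^1$ planar curves of the same constant speed ($\alpha$ on $[a_1,b_1]$, $\beta$ on $[a_2,b_2]$) is the curve on $[0,(b_1-a_1)+(b_2-a_2)]$ equal to $\alpha(s+a_1)$ for $s\le b_1-a_1$ and to $T(\beta(s-(b_1-a_1)+a_2))$ afterwards, where $T$ is the orientation-preserving rigid motion sending $\beta(a_2)$ to $\alpha(b_1)$ and the unit tangent of $\beta$ at $a_2$ to that of $\alpha$ at $b_1$; it is associative. Let $D_k=\{(c_1,\dots,c_{k-1})\in[0,1]^{k-1}: 0\le c_1\le\dots\le c_{k-1}\le 1\}$, with interior $\operatorname{int}(D_k)$ in $\mathbb{R}^{k-1}$; set $c_0=0$, $c_k=1$. For $C\in D_k$ let $\gamma_i$ be the restriction of $\gamma$ to $[c_{i-1},c_i]$, $i=1,\dots,k$ (a degenerate arc is a point carrying the tangent direction of $\gamma$ there). For $\sigma\in S_k$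 (permutations of $\{1,\dots,k\}$), $r_{\sigma,C}:=\gamma_{\sigma(1)}*\gamma_{\sigma(2)}*\dots*\gamma_{\sigma(k)}$, parametrized over $[0,1]$ (and moved by a rigid motion to start at the origin with initial tangent along the positive $x$-axis). A closed $C^1$ curve means $r_{\sigma,C}(0)=r_{\sigma,C}(1)$ and equal tangents there. $Z_k=\{z_0,\dots,z_{k-1}\}\subseteq S_k$ is the subgroup of cyclic shifts, $z_h(i)=i+h$ if $i\le k-h$ and $z_h(i)=i+h-k$ if $i>k-h$. *)

(* Defs.v *)
From Stdlib Require Import Reals ZArith.
From mathcomp Require Import all_boot all_fingroup.

Set Implicit Arguments.
Unset Strict Implicit.
Unset Printing Implicit Defensive.

Open Scope R_scope.

Definition pt2 := (R * R)%type.
Definition padd (p q : pt2) : pt2 := (fst p + fst q, snd p + snd q).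
Definition psub (p q : pt2) : pt2 := (fst p - fst q, snd p - snd q).
Definition rot (a : R) (p : pt2) : pt2 :=
  (cos a * fst p - sin a * snd p, sin a * fst p + cos a * snd p).

Definition deriv01 (f : R -> R) (s l : R) : Prop :=
  forall eps, 0 < eps -> exists delta, 0 < delta /\
    forall t, 0 <= t <= 1 -> t <> s -> Rabs (t - s) < delta ->
      Rabs ((f t - f s) / (t - s) - l) < eps.

Definition cont01 (f : R -> R) (s : R) : Prop :=
  forall eps, 0 < eps -> exists delta, 0 < delta /\
    forall t, 0 <= t <= 1 -> Rabs (t - s) < delta -> Rabs (f t - f s) < eps.

(** A planar arc parametrized on [0, alen], carrying (as angles) the unit
    tangent directions at its start and end point.  Carrying the tangents
    makes sense of degenerate arcs ("a point carrying a tangent direction"). *)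
Record arc := mkArc {
  alen  : R;
  apt   : R -> pt2;
  aang0 : R;   (* unit tangent at start = (cos aang0, sin aang0) *)
  aang1 : R    (* unit tangent at end   = (cos aang1, sin aang1) *)
}.

(** Concatenation alpha * beta: beta is moved by the orientation-preserving
    rigid motion T sending beta's start point to alpha's end point and
    beta's start tangent to alpha's end tangent. *)
Definition concat (a b : arc) : arc :=
  mkArc (alen a + alen b)
    (fun s => if Rle_dec s (alen a) then apt a s
              else padd (apt a (alen a))
                        (rot (aang1 a - aang0 b)
                             (psub (apt b (s - alen a)) (apt b 0))))
    (aang0 a) (aang1 b + (aang1 a - aang0 b)).

Definition concat_seq (l : seq arc) : arc :=
  match l with
  | [::] => mkArc 0 (fun _ => (0, 0)) 0 0
  | a :: t => foldl concat a t
  end.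

(** Move an arc by a rigid motion so that it starts at the origin with
    initial tangent along the positive x-axis. *)
Definition normalize (a : arc) : arc :=
  mkArc (alen a) (fun s => rot (- aang0 a) (psub (apt a s) (apt a 0)))
        0 (aang1 a - aang0 a).

Definition sub_arc (gamma : R -> pt2) (theta : R -> R) (x y : R) : arc :=
  mkArc (y - x) (fun s => gamma (s + x)) (theta x) (theta y).

Definition cutv (k : nat) (C : nat -> R) (i : nat) : R :=
  if Nat.eqb i 0 then 0 else if Nat.eqb i k then 1 else C i.

Definition in_int_Dk (k : nat) (C : nat -> R) : Prop :=
  forall i : nat, (i < k)%nat -> cutv k C i < cutv k C (S i).

(** The i-th arc gamma_{i+1} (0-indexed i : 'I_k) is gamma on [c_i, c_{i+1}]. *)
Definition piece (gamma : R -> pt2) (theta : R -> R) (k : nat) (C : nat -> R)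
  (i : 'I_k) : arc :=
  sub_arc gamma theta (cutv k C i) (cutv k C (S i)).

Definition rearr (gamma : R -> pt2) (theta : R -> R) (k : nat) (sigma : 'S_k)
  (C : nat -> R) : arc :=
  normalize (concat_seq [seq piece gamma theta C (sigma j) | j <- enum 'I_k]).

Definition closed_C1 (a : arc) : Prop :=
  apt a 0 = apt a (alen a) /\
  cos (aang0 a) = cos (aang1 a) /\ sin (aang0 a) = sin (aang1 a).

(** sigma is in Z_k (0-indexed: z_h(i) = (i + h) mod k). *)
Definition is_cyclic_shift (k : nat) (sigma : 'S_k) : Prop :=
  exists h : nat, (h < k)%nat /\
    forall i : 'I_k, nat_of_ord (sigma i) = ((nat_of_ord i + h) %% k)%nat.

(* Main.v *)
Require Import Defs.
From Stdlib Require Import Reals ZArith Lra Lia Psatz FunctionalExtensionality Classical ClassicalEpsilon.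
From Coquelicot Require Import Coquelicot.
From mathcomp Require Import all_boot all_fingroup zify.
Require Import Defs.
Open Scope R_scope.

Lemma pt_eq (p q : pt2) : fst p = fst q -> snd p = snd q -> p = q.
Proof. destruct p, q; simpl; intros -> ->; reflexivity. Qed.

Definition scal2 (l : R) (p : pt2) : pt2 := (l * fst p, l * snd p).

Lemma rot_comp a b p : rot a (rot b p) = rot (a + b) p.
Proof. unfold rot; apply pt_eq; simpl; rewrite cos_plus sin_plus; ring. Qed.

Lemma rot0 p : rot 0 p = p.
Proof. unfold rot; apply pt_eq; simpl; rewrite cos_0 sin_0; ring. Qed.

Lemma rot_scal a l p : rot a (scal2 l p) = scal2 l (rot a p).
Proof. unfold rot, scal2; apply pt_eq; simpl; ring. Qed.

Lemma rot_zero a : rot a (0,0) = (0,0).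
Proof. unfold rot; apply pt_eq; simpl; ring. Qed.

Lemma rot_eq0 a p : rot a p = (0,0) -> p = (0,0).
Proof.
  intro H. have := f_equal (rot (-a)) H. rewrite rot_comp rot_zero Rplus_opp_l rot0. auto.
Qed.

Definition dot (p q : pt2) := fst p * fst q + snd p * snd q.
Definition cross (p q : pt2) := fst p * snd q - snd p * fst q.
Definition ang (p q : pt2) := atan (cross p q / dot p q).

Lemma ang_bound p q : - PI / 2 < ang p q < PI / 2.
Proof. apply atan_bound. Qed.

Lemma ang_anti p q : ang q p = - ang p q.
Proof.
  unfold ang. rewrite -atan_opp. f_equal. unfold cross, dot.
  unfold Rdiv. replace (fst q * fst p + snd q * snd p) with (fst p * fst q + snd p * snd q) by ring.
  ring.
Qed.

Lemma dot_sym p q : dot p q = dot q p.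
Proof. unfold dot; ring. Qed.

Lemma ang_rot p q : 0 < dot p q -> exists l, 0 < l /\ rot (ang p q) p = scal2 l q.
Proof.
  intro Hd. unfold ang. set z := cross p q / dot p q.
  rewrite /rot cos_atan sin_atan.
  have Hs : 0 < sqrt (1 + z²).
  { apply sqrt_lt_R0. unfold Rsqr. nra. }
  have Hn : 0 < fst p * fst p + snd p * snd p.
  { destruct p as [p1 p2]; destruct q as [q1 q2]; unfold dot in Hd; simpl in *.
    destruct (Req_dec p1 0) as [E|E].
    - subst p1. destruct (Req_dec p2 0) as [E2|E2]. subst p2. lra. nra.
    - nra. }
  exists ((fst p * fst p + snd p * snd p) / (dot p q * sqrt (1 + z²))).
  split. apply Rdiv_lt_0_compat; [lra | nra].
  unfold scal2, z, cross, dot in *. apply pt_eq; simpl; field; lra.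
Qed.

Lemma two_pi_lt : forall x : R, - (2 * PI) < x < 2 * PI -> cos x = 1 -> sin x = 0 -> x = 0.
Proof.
  intros x Hx Hc Hs. destruct (sin_eq_0_0 x Hs) as [k Hk].
  have HP := PI_RGT_0.
  have Hk1 : (-2 < k)%Z.
  { apply lt_IZR. rewrite Hk in Hx. simpl. nra. }
  have Hk2 : (k < 2)%Z.
  { apply lt_IZR. rewrite Hk in Hx. simpl. nra. }
  have : (k = -1 \/ k = 0 \/ k = 1)%Z by lia.
  case=> [E|[E|E]]; subst k; simpl in Hk; subst x.
  - replace (-1 * PI) with (- PI) in Hc by ring. rewrite cos_neg cos_PI in Hc. lra.
  - ring.
  - replace (1 * PI) with PI in Hc by ring. rewrite cos_PI in Hc. lra.
Qed.

Lemma rot_fix x p l : p <> (0,0) -> 0 < l -> rot x p = scal2 l p ->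
  - (2 * PI) < x < 2 * PI -> x = 0.
Proof.
  intros Hp Hl Hr Hx. destruct p as [p1 p2]. unfold rot, scal2 in Hr; simpl in Hr.
  injection Hr as E1 E2.
  have Hn : 0 < p1 * p1 + p2 * p2.
  { destruct (Req_dec p1 0) as [E|E]. subst p1. destruct (Req_dec p2 0) as [E'|E']. subst; congruence. nra. nra. }
  have Hcs := sin2_cos2 x. unfold Rsqr in Hcs.
  have Hl2 : l * l = 1.
  { have : (cos x * p1 - sin x * p2) * (cos x * p1 - sin x * p2) + (sin x * p1 + cos x * p2) * (sin x * p1 + cos x * p2) = (sin x * sin x + cos x * cos x) * (p1 * p1 + p2 * p2) by ring.
    rewrite E1 E2 Hcs. intro H. apply (Rmult_eq_reg_r (p1 * p1 + p2 * p2)); nra. }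
  have Hl1 : l = 1 by nra.
  subst l.
  have Hc : cos x = 1.
  { have : (cos x - 1) * (p1 * p1 + p2 * p2) = 0 by nra. intro H.
    destruct (Rmult_integral _ _ H); lra. }
  have Hs : sin x = 0.
  { rewrite Hc in E1 E2. have F1 : sin x * p2 = 0 by lra. have F2 : sin x * p1 = 0 by lra.
    have : sin x * (p1 * p1 + p2 * p2) = 0.
    { replace (sin x * (p1 * p1 + p2 * p2)) with (p1 * (sin x * p1) + p2 * (sin x * p2)) by ring.
      rewrite F1 F2; ring. } intro H.
    destruct (Rmult_integral _ _ H); lra. }
  apply two_pi_lt; auto.
Qed.

Lemma dot_pos_nz p q : 0 < dot p q -> p <> (0,0).
Proof. intros H E; subst p; unfold dot in H; simpl in H; lra. Qed.

Lemma cell p1 p2 p3 p4 : 0 < dot p1 p2 -> 0 < dot p2 p3 -> 0 < dot p3 p4 -> 0 < dot p4 p1 ->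
  ang p1 p2 + ang p2 p3 + ang p3 p4 + ang p4 p1 = 0.
Proof.
  intros H1 H2 H3 H4.
  destruct (ang_rot _ _ H1) as [l1 [Hl1 R1]].
  destruct (ang_rot _ _ H2) as [l2 [Hl2 R2]].
  destruct (ang_rot _ _ H3) as [l3 [Hl3 R3]].
  destruct (ang_rot _ _ H4) as [l4 [Hl4 R4]].
  apply (@rot_fix _ p1 (l4 * l3 * l2 * l1)).
  - exact (dot_pos_nz _ _ H1).
  - repeat apply Rmult_lt_0_compat; auto.
  - replace (ang p1 p2 + ang p2 p3 + ang p3 p4 + ang p4 p1) with
      (ang p4 p1 + (ang p3 p4 + (ang p2 p3 + ang p1 p2))) by ring.
    rewrite -!rot_comp R1 !rot_scal R2 !rot_scal R3 !rot_scal R4.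
    unfold scal2; apply pt_eq; simpl; ring.
  - have := ang_bound p1 p2. have := ang_bound p2 p3. have := ang_bound p3 p4. have := ang_bound p4 p1. have := PI_RGT_0. lra.
Qed.

Lemma edge a b V : V <> (0,0) -> 0 < dot (rot a V) (rot b V) -> Rabs (a - b) < PI / 2 ->
  ang (rot a V) (rot b V) = b - a.
Proof.
  intros HV Hd Hab. destruct (ang_rot _ _ Hd) as [l [Hl R1]].
  have : ang (rot a V) (rot b V) + a - b = 0.
  { apply (@rot_fix _ V l HV Hl).
    - transitivity (rot (-b) (rot (ang (rot a V) (rot b V)) (rot a V))).
      rewrite !rot_comp; f_equal; ring.
      rewrite R1 rot_scal rot_comp Rplus_opp_l rot0. reflexivity.
    - have H1 := ang_bound (rot a V) (rot b V). have H2 := PI_RGT_0.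
      move: Hab; rewrite /Rabs; case: Rcase_abs => ? ?; lra. }
  lra.
Qed.

Lemma abs_prod_le x y X Y : Rabs x <= X -> Rabs y <= Y -> Rabs (x * y) <= X * Y.
Proof.
  intros H1 H2. rewrite Rabs_mult. apply Rmult_le_compat; auto using Rabs_pos.
Qed.

Lemma dot_close t1 t2 a1 a2 b1 b2 :
  (t1, t2) <> (0,0) ->
  Rabs (a1 - t1) < (Rabs t1 + Rabs t2) / 8 -> Rabs (a2 - t2) < (Rabs t1 + Rabs t2) / 8 ->
  Rabs (b1 - t1) < (Rabs t1 + Rabs t2) / 8 -> Rabs (b2 - t2) < (Rabs t1 + Rabs t2) / 8 ->
  0 < a1 * b1 + a2 * b2.
Proof.
  intros Ht H1 H2 H3 H4.
  set S := Rabs t1 + Rabs t2.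
  have HS : 0 < S.
  { unfold S. destruct (Req_dec t1 0) as [E|E].
    - destruct (Req_dec t2 0) as [E'|E']. subst; congruence.
      have := Rabs_pos t1. have := Rabs_pos_lt _ E'. lra.
    - have := Rabs_pos t2. have := Rabs_pos_lt _ E. lra. }
  set e1 := a1 - t1. set e2 := a2 - t2. set f1 := b1 - t1. set f2 := b2 - t2.
  have {}H1 : Rabs e1 < S/8 := H1. have {}H2 : Rabs e2 < S/8 := H2.
  have {}H3 : Rabs f1 < S/8 := H3. have {}H4 : Rabs f2 < S/8 := H4.
  have Key : a1 * b1 + a2 * b2 = (t1*t1 + t2*t2) + (t1*(e1+f1) + t2*(e2+f2)) + (e1*f1 + e2*f2).
  { unfold e1, e2, f1, f2; ring. }
  have Hsq : t1 * t1 + t2 * t2 >= S * S / 2.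
  { have -> : t1 * t1 = Rabs t1 * Rabs t1 by rewrite -Rabs_mult Rabs_right; nra.
    have -> : t2 * t2 = Rabs t2 * Rabs t2 by rewrite -Rabs_mult Rabs_right; nra.
    have := Rle_0_sqr (Rabs t1 - Rabs t2). unfold Rsqr, S. nra. }
  have B1 : Rabs (t1 * (e1 + f1)) <= Rabs t1 * (2 * (S/8)).
  { apply abs_prod_le. lra. have := Rabs_triang e1 f1. lra. }
  have B2 : Rabs (t2 * (e2 + f2)) <= Rabs t2 * (2 * (S/8)).
  { apply abs_prod_le. lra. have := Rabs_triang e2 f2. lra. }
  have B3 : Rabs (e1 * f1) <= (S/8) * (S/8) by apply abs_prod_le; lra.
  have B4 : Rabs (e2 * f2) <= (S/8) * (S/8) by apply abs_prod_le; lra.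
  have C1 := Rabs_triang (t1 * (e1 + f1)) (t2 * (e2 + f2)).
  have C2 := Rabs_triang (e1 * f1) (e2 * f2).
  have D1 := Rle_abs (- (t1 * (e1 + f1) + t2 * (e2 + f2))).
  have D2 := Rle_abs (- (e1 * f1 + e2 * f2)).
  rewrite Rabs_Ropp in D1. rewrite Rabs_Ropp in D2.
  rewrite Key.
  have : Rabs t1 * (2 * (S / 8)) + Rabs t2 * (2 * (S / 8)) = S * S / 4 by unfold S; field.
  nra.
Qed.

Fixpoint sumN (f : nat -> R) (n : nat) : R :=
  match n with O => 0 | S n => sumN f n + f n end.

Lemma sumN_tele f n : sumN (fun i => f (S i) - f i) n = f n - f O.
Proof. induction n; simpl; [ring | rewrite IHn; ring]. Qed.

Lemma sumN_ext f g n : (forall i, (i < n)%nat -> f i = g i) -> sumN f n = sumN g n.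
Proof.
  induction n; simpl; auto. intro H. rewrite IHn; [rewrite H; [reflexivity| lia] | intros; apply H; lia].
Qed.

Lemma sumN_add f g n : sumN (fun i => f i + g i) n = sumN f n + sumN g n.
Proof. induction n; simpl; [ring | rewrite IHn; ring]. Qed.

Lemma sumN_opp f n : sumN (fun i => - f i) n = - sumN f n.
Proof. induction n; simpl; [ring | rewrite IHn; ring]. Qed.

Lemma sumN_zero n : sumN (fun _ => 0) n = 0.
Proof. induction n; simpl; [ring | rewrite IHn; ring]. Qed.

Definition in01 (s : R) := 0 <= s <= 1.

Definition cont2 (G : R -> R -> pt2) (u v : R) : Prop :=
  forall eps, 0 < eps -> exists delta, 0 < delta /\
    forall u' v', in01 u' -> in01 v' -> Rabs (u' - u) < delta -> Rabs (v' - v) < delta ->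
      Rabs (fst (G u' v') - fst (G u v)) < eps /\ Rabs (snd (G u' v') - snd (G u v)) < eps.

Definition Good (G : R -> R -> pt2) (eb et el er : R -> R) (u v d : R) : Prop :=
  (forall u' v', in01 u' -> in01 v' -> Rabs (u' - u) < 2 * d -> Rabs (v' - v) < 2 * d ->
      Rabs (fst (G u' v') - fst (G u v)) < (Rabs (fst (G u v)) + Rabs (snd (G u v))) / 8 /\
      Rabs (snd (G u' v') - snd (G u v)) < (Rabs (fst (G u v)) + Rabs (snd (G u v))) / 8) /\
  (forall s, in01 s -> Rabs (s - u) < 2 * d ->
     Rabs (eb s - eb u) < PI / 4 /\ Rabs (et s - et u) < PI / 4 /\
     Rabs (el s - el u) < PI / 4 /\ Rabs (er s - er u) < PI / 4).

Lemma nz_norm (p : pt2) : p <> (0,0) -> 0 < (Rabs (fst p) + Rabs (snd p)) / 8.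
Proof.
  destruct p as [a b]; simpl; intro H.
  destruct (Req_dec a 0) as [E|E].
  - destruct (Req_dec b 0) as [E'|E']. subst; congruence.
    have := Rabs_pos a. have := Rabs_pos_lt _ E'. lra.
  - have := Rabs_pos b. have := Rabs_pos_lt _ E. lra.
Qed.

Lemma gauge_ex G eb et el er u v : in01 u -> in01 v -> cont2 G u v -> G u v <> (0,0) ->
  cont01 eb u -> cont01 et u -> cont01 el u -> cont01 er u ->
  exists d, 0 < d /\ Good G eb et el er u v d.
Proof.
  intros Hu Hv HG Hnz C1 C2 C3 C4.
  have HP := PI_RGT_0.
  destruct (HG _ (nz_norm _ Hnz)) as [d0 [Hd0 H0]].
  destruct (C1 (PI/4)) as [d1 [Hd1 H1]]; [lra|].
  destruct (C2 (PI/4)) as [d2 [Hd2 H2]]; [lra|].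
  destruct (C3 (PI/4)) as [d3 [Hd3 H3]]; [lra|].
  destruct (C4 (PI/4)) as [d4 [Hd4 H4]]; [lra|].
  set d := Rmin (Rmin d0 d1) (Rmin (Rmin d2 d3) d4).
  have Hm0 : d <= d0 by unfold d; repeat (apply Rmin_glb_lt || apply Rmin_glb || idtac);
    [apply Rle_trans with (Rmin d0 d1); [apply Rmin_l | apply Rmin_l]].
  have Hm1 : d <= d1.
  { unfold d. apply Rle_trans with (Rmin d0 d1); [apply Rmin_l | apply Rmin_r]. }
  have Hm2 : d <= d2.
  { unfold d. apply Rle_trans with (Rmin (Rmin d2 d3) d4); [apply Rmin_r|].
    apply Rle_trans with (Rmin d2 d3); [apply Rmin_l | apply Rmin_l]. }
  have Hm3 : d <= d3.
  { unfold d. apply Rle_trans with (Rmin (Rmin d2 d3) d4); [apply Rmin_r|].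
    apply Rle_trans with (Rmin d2 d3); [apply Rmin_l | apply Rmin_r]. }
  have Hm4 : d <= d4.
  { unfold d. apply Rle_trans with (Rmin (Rmin d2 d3) d4); [apply Rmin_r | apply Rmin_r]. }
  have Hdpos : 0 < d.
  { unfold d. repeat apply Rmin_pos; auto. }
  exists (d / 2). split; [lra|]. split.
  - intros u' v' Hu' Hv' E1 E2. apply H0; auto; lra.
  - intros s Hs E. repeat split; [apply H1 | apply H2 | apply H3 | apply H4]; auto; lra.
Qed.

Lemma fine G eb et el er :
  (forall u v, in01 u -> in01 v -> cont2 G u v) ->
  (forall u v, in01 u -> in01 v -> G u v <> (0,0)) ->
  (forall s, in01 s -> cont01 eb s /\ cont01 et s /\ cont01 el s /\ cont01 er s) ->
  exists d, 0 < d /\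
   (forall u v u' v', in01 u -> in01 v -> in01 u' -> in01 v' -> Rabs (u - u') < d -> Rabs (v - v') < d ->
      0 < dot (G u v) (G u' v')) /\
   (forall s s', in01 s -> in01 s' -> Rabs (s - s') < d ->
      Rabs (eb s - eb s') < PI / 2 /\ Rabs (et s - et s') < PI / 2 /\
      Rabs (el s - el s') < PI / 2 /\ Rabs (er s - er s') < PI / 2).
Proof.
  intros HC HNZ HE.
  have Hg : forall u v, exists d : posreal, in01 u -> in01 v -> Good G eb et el er u v d.
  { intros u v. destruct (classic (in01 u /\ in01 v)) as [[Hu Hv]|Hn].
    - destruct (HE u Hu) as [C1 [C2 [C3 C4]]].
      destruct (@gauge_ex G eb et el er u v Hu Hv (HC u v Hu Hv) (HNZ u v Hu Hv) C1 C2 C3 C4) as [d [Hd Gd]].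
      exists (mkposreal d Hd). intros; exact Gd.
    - exists (mkposreal 1 Rlt_0_1). intros Hu Hv. exfalso; apply Hn; auto. }
  pose gauge u v := proj1_sig (constructive_indefinite_description _ (Hg u v)).
  have Hgauge : forall u v, in01 u -> in01 v -> Good G eb et el er u v (gauge u v).
  { intros u v Hu Hv. unfold gauge. destruct (constructive_indefinite_description _ (Hg u v)) as [dd Hdd].
    simpl. apply Hdd; auto. }
  destruct (compactness_value_2d 0 1 0 1 gauge) as [d Hd].
  exists d. split; [apply cond_pos|]. split.
  - intros u v u' v' Hu Hv Hu' Hv' E1 E2. apply NNPP. intro Hneg.
    apply (Hd u v Hu Hv). intros [x [y [Hx [Hy [F1 [F2 F3]]]]]]. apply Hneg.
    destruct (Hgauge x y Hx Hy) as [Gd _].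
    have Hnz := HNZ x y Hx Hy.
    have Gp := cond_pos (gauge x y).
    have HA1 : Rabs (u - x) < 2 * gauge x y by lra.
    have HA2 : Rabs (v - y) < 2 * gauge x y by lra.
    destruct (Gd u v Hu Hv HA1 HA2) as [A1 A2].
    destruct (Gd u' v' Hu' Hv') as [B1 B2].
    { move: F1 E1; rewrite /Rabs; do 3 case: Rcase_abs; intros; lra. }
    { move: F2 E2; rewrite /Rabs; do 3 case: Rcase_abs; intros; lra. }
    unfold dot. destruct (G x y) as [t1 t2] eqn:EG. simpl in *.
    exact (dot_close _ _ _ _ _ _ Hnz A1 A2 B1 B2).
  - intros s s' Hs Hs' E. 
    have H0 : in01 0 by (unfold in01; lra).
    apply NNPP. intro Hneg.
    apply (Hd s 0 Hs H0). intros [x [y [Hx [Hy [F1 [F2 F3]]]]]]. apply Hneg.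
    destruct (Hgauge x y Hx Hy) as [_ Gd].
    have Gp := cond_pos (gauge x y).
    destruct (Gd s Hs) as [A1 [A2 [A3 A4]]]; [lra|].
    destruct (Gd s' Hs') as [B1 [B2 [B3 B4]]].
    { move: F1 E; rewrite /Rabs; do 3 case: Rcase_abs; intros; lra. }
    have HP := PI_RGT_0.
    move: A1 A2 A3 A4 B1 B2 B3 B4. rewrite /Rabs.
    repeat case: Rcase_abs; intros; lra.
Qed.

Lemma TL G eb et el er (V : pt2) :
  V <> (0,0) ->
  (forall u v, in01 u -> in01 v -> cont2 G u v) ->
  (forall u v, in01 u -> in01 v -> G u v <> (0,0)) ->
  (forall s, in01 s -> cont01 eb s /\ cont01 et s /\ cont01 el s /\ cont01 er s) ->
  (forall u, in01 u -> G u 0 = rot (eb u) V) ->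
  (forall u, in01 u -> G u 1 = rot (et u) V) ->
  (forall v, in01 v -> G 0 v = rot (el v) V) ->
  (forall v, in01 v -> G 1 v = rot (er v) V) ->
  (eb 1 - eb 0) - (et 1 - et 0) + (er 1 - er 0) - (el 1 - el 0) = 0.
Proof.
  intros HV HC HNZ HE Hb Ht Hl Hr.
  destruct (@fine G eb et el er HC HNZ HE) as [d [Hd [Fdot Fedge]]].
  destruct (archimed_cor1 d Hd) as [N [HN HN0]].
  have HNr : 0 < INR N by apply lt_0_INR; lia.
  pose x i := INR i / INR N.
  have Hx : forall i, (i <= N)%nat -> in01 (x i).
  { intros i Hi. unfold x, in01. split.
    - apply Rdiv_le_0_compat; [apply pos_INR | auto].
    - apply (Rmult_le_reg_r (INR N)); auto. unfold Rdiv. rewrite Rmult_assoc Rinv_l; [|lra].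
      rewrite Rmult_1_r Rmult_1_l. apply le_INR. lia. }
  have Hx0 : x O = 0 by (unfold x; simpl; unfold Rdiv; ring).
  have HxN : x N = 1 by (unfold x; field; lra).
  have Hxs : forall i, Rabs (x i - x (S i)) < d.
  { intros i. unfold x. rewrite S_INR.
    replace (INR i / INR N - (INR i + 1) / INR N) with (- / INR N) by (field; lra).
    rewrite Rabs_Ropp Rabs_right; [lra|]. apply Rle_ge, Rlt_le, Rinv_0_lt_compat; auto. }
  have Hxz : forall i, Rabs (x i - x i) < d by (intros; rewrite Rminus_diag Rabs_R0; auto).
  pose P i j := G (x i) (x j).
  pose h i j := ang (P i j) (P (S i) j).
  pose v i j := ang (P i j) (P i (S j)).
  have Dh : forall i j, (i < N)%nat -> (j <= N)%nat -> 0 < dot (P i j) (P (S i) j).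
  { intros i j Hi Hj. apply Fdot; auto; apply Hx; lia. }
  have Dh' : forall i j, (i < N)%nat -> (j <= N)%nat -> 0 < dot (P (S i) j) (P i j).
  { intros i j Hi Hj. apply Fdot; auto; try (apply Hx; lia). rewrite Rabs_minus_sym; auto. }
  have Dv : forall i j, (i <= N)%nat -> (j < N)%nat -> 0 < dot (P i j) (P i (S j)).
  { intros i j Hi Hj. apply Fdot; auto; apply Hx; lia. }
  have Dv' : forall i j, (i <= N)%nat -> (j < N)%nat -> 0 < dot (P i (S j)) (P i j).
  { intros i j Hi Hj. apply Fdot; auto; try (apply Hx; lia). rewrite Rabs_minus_sym; auto. }
  have Cell : forall i j, (i < N)%nat -> (j < N)%nat ->
     h i j + v (S i) j - h i (S j) - v i j = 0.
  { intros i j Hi Hj.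
    have := cell _ _ _ _ (Dh i j Hi ltac:(lia)) (Dv (S i) j ltac:(lia) Hj) (Dh' i (S j) Hi ltac:(lia)) (Dv' i j ltac:(lia) Hj).
    rewrite (ang_anti (P i (S j))) (ang_anti (P i j)). unfold h, v. lra. }
  pose Vs i := sumN (fun j => v i j) N.
  have Row : forall i, (i < N)%nat -> (h i O - h i N) + (Vs (S i) - Vs i) = 0.
  { intros i Hi.
    have E : sumN (fun j => (- h i (S j) - - h i j) + (v (S i) j - v i j)) N = 0.
    { rewrite -(sumN_zero N). apply sumN_ext. intros j Hj. have := Cell i j Hi Hj. lra. }
    rewrite sumN_add sumN_tele in E.
    have E2 : sumN (fun j => v (S i) j - v i j) N = Vs (S i) - Vs i.
    { unfold Vs. transitivity (sumN (fun j => v (S i) j + - v i j) N).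
      apply sumN_ext; intros; ring. rewrite sumN_add sumN_opp. reflexivity. }
    rewrite E2 in E. lra. }
  have Tot : sumN (fun i => h i O) N - sumN (fun i => h i N) N + (Vs N - Vs O) = 0.
  { have E : sumN (fun i => (h i O + - h i N) + (Vs (S i) - Vs i)) N = 0.
    { rewrite -(sumN_zero N). apply sumN_ext. intros i Hi. have := Row i Hi. lra. }
    rewrite sumN_add sumN_add sumN_opp sumN_tele in E. lra. }
  have Bb : sumN (fun i => h i O) N = eb 1 - eb 0.
  { transitivity (sumN (fun i => eb (x (S i)) - eb (x i)) N); [|by rewrite sumN_tele HxN Hx0]. apply sumN_ext. intros i Hi. unfold h, P.
    rewrite Hx0 !Hb; try (apply Hx; lia). apply edge; auto.
    - have D := Dh i O Hi ltac:(lia). unfold P in D. rewrite Hx0 in D. rewrite !Hb in D; try (apply Hx; lia). exact D.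
    - destruct (Fedge (x i) (x (S i))) as [E1 [E2 [E3 E4]]]; try (apply Hx; lia); auto. }
  have Bt : sumN (fun i => h i N) N = et 1 - et 0.
  { transitivity (sumN (fun i => et (x (S i)) - et (x i)) N); [|by rewrite sumN_tele HxN Hx0]. apply sumN_ext. intros i Hi. unfold h, P.
    rewrite HxN !Ht; try (apply Hx; lia). apply edge; auto.
    - have D := Dh i N Hi ltac:(lia). unfold P in D. rewrite HxN in D. rewrite !Ht in D; try (apply Hx; lia). exact D.
    - destruct (Fedge (x i) (x (S i))) as [E1 [E2 [E3 E4]]]; try (apply Hx; lia); auto. }
  have Br : Vs N = er 1 - er 0.
  { unfold Vs. transitivity (sumN (fun i => er (x (S i)) - er (x i)) N); [|by rewrite sumN_tele HxN Hx0]. apply sumN_ext. intros j Hj. unfold v, P.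
    rewrite HxN !Hr; try (apply Hx; lia). apply edge; auto.
    - have D := Dv N j ltac:(lia) Hj. unfold P in D. rewrite HxN in D. rewrite !Hr in D; try (apply Hx; lia). exact D.
    - destruct (Fedge (x j) (x (S j))) as [E1 [E2 [E3 E4]]]; try (apply Hx; lia); auto. }
  have Bl : Vs O = el 1 - el 0.
  { unfold Vs. transitivity (sumN (fun i => el (x (S i)) - el (x i)) N); [|by rewrite sumN_tele HxN Hx0]. apply sumN_ext. intros j Hj. unfold v, P.
    rewrite Hx0 !Hl; try (apply Hx; lia). apply edge; auto.
    - have D := Dv O j ltac:(lia) Hj. unfold P in D. rewrite Hx0 in D. rewrite !Hl in D; try (apply Hx; lia). exact D.
    - destruct (Fedge (x j) (x (S j))) as [E1 [E2 [E3 E4]]]; try (apply Hx; lia); auto. }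
  lra.
Qed.

Lemma rot_padd a p q : rot a (padd p q) = padd (rot a p) (rot a q).
Proof. unfold rot, padd; apply pt_eq; simpl; ring. Qed.

Fixpoint Da (psi : R) (l : seq arc) : pt2 :=
  match l with
  | [::] => (0,0)
  | b :: t => padd (rot (psi - aang0 b) (psub (apt b (alen b)) (apt b 0)))
                   (Da (psi + (aang1 b - aang0 b)) t)
  end.

Fixpoint Sang (l : seq arc) : R :=
  match l with [::] => 0 | b :: t => (aang1 b - aang0 b) + Sang t end.

Lemma Da_ext psi psi' l : psi = psi' -> Da psi l = Da psi' l.
Proof. by move=> ->. Qed.

Fixpoint allpos (t : seq arc) : Prop :=
  match t with [::] => True | b :: t => 0 < alen b /\ allpos t end.

Lemma foldl_props (t : seq arc) : forall A, 0 <= alen A -> allpos t ->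
  0 <= alen (foldl concat A t) /\
  aang0 (foldl concat A t) = aang0 A /\
  aang1 (foldl concat A t) = aang1 A + Sang t /\
  apt (foldl concat A t) 0 = apt A 0 /\
  apt (foldl concat A t) (alen (foldl concat A t)) = padd (apt A (alen A)) (Da (aang1 A) t).
Proof.
  induction t as [|b t IH]; intros A HA Hb.
  - simpl. repeat split; auto. ring. destruct (apt A (alen A)); unfold padd; simpl; f_equal; ring.
  - simpl. destruct Hb as [Hb0 Hb].
    have HA' : 0 <= alen (concat A b) by (simpl; lra).
    destruct (IH (concat A b) HA' Hb) as [L [A0 [A1 [P0 P1]]]].
    split; [auto|]. split; [rewrite A0; reflexivity|]. split.
    { rewrite A1. simpl. ring. }
    split.
    { rewrite P0. simpl. destruct (Rle_dec 0 (alen A)); [reflexivity| lra]. }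
    rewrite P1. simpl.
    destruct (Rle_dec (alen A + alen b) (alen A)) as [E|E]; [lra|].
    replace (alen A + alen b - alen A) with (alen b) by ring.
    rewrite (@Da_ext (aang1 b + (aang1 A - aang0 b)) (aang1 A + (aang1 b - aang0 b))); [|ring].
    unfold padd; apply pt_eq; simpl; ring.
Qed.

Fixpoint Dl (th : R -> R) (ga : R -> pt2) (c : nat -> R) (psi : R) (s : seq nat) : pt2 :=
  match s with
  | [::] => (0,0)
  | i :: t => padd (rot (psi - th (c i)) (psub (ga (c (S i))) (ga (c i))))
                   (Dl th ga c (psi + (th (c (S i)) - th (c i))) t)
  end.

Fixpoint SD (th : R -> R) (c : nat -> R) (s : seq nat) : R :=
  match s with [::] => 0 | i :: t => (th (c (S i)) - th (c i)) + SD th c t end.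

Lemma Da_rot l : forall psi phi, Da (psi + phi) l = rot phi (Da psi l).
Proof.
  induction l as [|b t IH]; intros psi phi; simpl.
  - rewrite rot_zero; reflexivity.
  - rewrite rot_padd rot_comp -IH. f_equal. f_equal. ring.
    apply Da_ext; ring.
Qed.

Lemma Dl_rot th ga c s : forall psi phi, Dl th ga c (psi + phi) s = rot phi (Dl th ga c psi s).
Proof.
  induction s as [|b t IH]; intros psi phi; simpl.
  - rewrite rot_zero; reflexivity.
  - rewrite rot_padd rot_comp -IH. f_equal. f_equal. ring.
    f_equal; ring.
Qed.

Lemma Da_pieces gamma theta k C (s : seq 'I_k) : forall psi,
  Da psi [seq piece gamma theta C i | i <- s] = Dl theta gamma (cutv k C) psi [seq nat_of_ord i | i <- s].
Proof.
  induction s as [|i t IH]; intros psi; simpl; auto.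
  rewrite IH. unfold piece, sub_arc; simpl. f_equal. f_equal. f_equal.
  - f_equal; f_equal; ring.
  - f_equal; f_equal; ring.
Qed.

Lemma Sang_pieces gamma theta k C (s : seq 'I_k) :
  Sang [seq piece gamma theta C i | i <- s] = SD theta (cutv k C) [seq nat_of_ord i | i <- s].
Proof.
  induction s as [|i t IH]; simpl; auto. rewrite IH. reflexivity.
Qed.

Lemma allpos_pieces gamma theta k C (s : seq 'I_k) :
  in_int_Dk k C -> allpos [seq piece gamma theta C i | i <- s].
Proof.
  intro H. induction s as [|i t IH]; simpl; auto. split; auto.
  have := H i (ltn_ord i). lra.
Qed.

Lemma closed_iff gamma theta k (sigma : 'S_k) C : (0 < k)%nat -> in_int_Dk k C ->
  (closed_C1 (rearr gamma theta sigma C) <->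
   (Dl theta gamma (cutv k C) 0 [seq nat_of_ord (sigma j) | j <- enum 'I_k] = (0,0) /\
    cos 0 = cos (SD theta (cutv k C) [seq nat_of_ord (sigma j) | j <- enum 'I_k]) /\
    sin 0 = sin (SD theta (cutv k C) [seq nat_of_ord (sigma j) | j <- enum 'I_k]))).
Proof.
  intros Hk HC.
  have E1 : [seq nat_of_ord (sigma j) | j <- enum 'I_k] = [seq nat_of_ord i | i <- [seq sigma j | j <- enum 'I_k]].
  { by elim: (enum _) => //= a l ->. }
  have E2 : [seq piece gamma theta C (sigma j) | j <- enum 'I_k] = [seq piece gamma theta C i | i <- [seq sigma j | j <- enum 'I_k]].
  { by elim: (enum _) => //= a l ->. }
  rewrite E1 -(Da_pieces gamma theta k C) -(Sang_pieces gamma theta k C) -E2.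
  have Hpos := allpos_pieces gamma theta k C [seq sigma j | j <- enum 'I_k] HC.
  rewrite -E2 in Hpos.
  unfold rearr, closed_C1.
  move: Hpos.
  case E : [seq piece gamma theta C (sigma j) | j <- enum 'I_k] => [|x t].
  { exfalso. have := f_equal size E. rewrite size_map size_enum_ord /=. lia. }
  intros [Hx Ht]. change (concat_seq (x :: t)) with (foldl concat x t).
  unfold normalize; cbn [apt alen aang0 aang1].
  destruct (@foldl_props t x ltac:(lra) Ht) as [L [A0 [A1 [P0 P1]]]].
  have Key : psub (apt (foldl concat x t) (alen (foldl concat x t))) (apt (foldl concat x t) 0)
             = Da (aang0 x) (x :: t).
  { rewrite P1 P0. simpl. rewrite Rminus_diag rot0.
    rewrite (@Da_ext (aang0 x + (aang1 x - aang0 x)) (aang1 x)); [|ring].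
    unfold padd, psub; apply pt_eq; simpl; ring. }
  have Hz : forall p, rot (- aang0 x) (psub p p) = (0,0).
  { intro p. unfold rot, psub; apply pt_eq; simpl; ring. }
  have Hr : Da (aang0 x) (x :: t) = rot (aang0 x) (Da 0 (x :: t)).
  { rewrite -Da_rot. apply Da_ext. ring. }
  rewrite Key A0 A1 Hz Hr rot_comp Rplus_opp_l rot0.
  replace (aang1 x + Sang t - aang0 x) with (Sang (x :: t)) by (simpl; ring).
  split; intros [H1 [H2 H3]]; split; auto.
Qed.

Lemma rot_add_same a u v : padd (rot a u) (rot a v) = rot a (padd u v).
Proof. by rewrite rot_padd. Qed.

Lemma Dl_cat th ga c s1 s2 : forall psi,
  Dl th ga c psi (s1 ++ s2) = padd (Dl th ga c psi s1) (Dl th ga c (psi + SD th c s1) s2).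
Proof.
  induction s1 as [|i t IH]; intros psi; simpl.
  - rewrite Rplus_0_r. destruct (Dl th ga c psi s2); unfold padd; simpl; f_equal; ring.
  - rewrite IH. replace (psi + (th (c i.+1) - th (c i)) + SD th c t) with
      (psi + (th (c i.+1) - th (c i) + SD th c t)) by ring.
    unfold padd; apply pt_eq; simpl; ring.
Qed.

Lemma SD_iota th c n : forall a, SD th c (iota a n) = th (c (a + n)%nat) - th (c a).
Proof.
  induction n as [|n IH]; intros a; simpl.
  - rewrite addn0; ring.
  - rewrite IH. replace (a.+1 + n)%nat with (a + n.+1)%nat by lia. ring.
Qed.

Lemma Dl_iota th ga c n : forall a psi,
  Dl th ga c psi (iota a n) = rot (psi - th (c a)) (psub (ga (c (a + n)%nat)) (ga (c a))).
Proof.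
  induction n as [|n IH]; intros a psi; simpl.
  - rewrite addn0. unfold rot, psub; apply pt_eq; simpl; ring.
  - rewrite IH. replace (psi + (th (c a.+1) - th (c a)) - th (c a.+1)) with (psi - th (c a)) by ring.
    rewrite rot_add_same. f_equal. replace (a.+1 + n)%nat with (a + n.+1)%nat by lia.
    unfold padd, psub; apply pt_eq; simpl; ring.
Qed.

Lemma Dl_filter th ga c (P : pred nat) s : (forall i, i \in s -> ~~ P i -> c i = c (S i)) ->
  forall psi, Dl th ga c psi s = Dl th ga c psi (filter P s).
Proof.
  induction s as [|i t IH]; intros H psi; simpl; auto.
  have H' : forall j, j \in t -> ~~ P j -> c j = c (S j).
  { intros j Hj; apply H. by rewrite in_cons Hj orbT. }
  case HP : (P i); simpl.
  - rewrite IH; auto.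
  - have E : c i = c (S i) by apply H; [rewrite in_cons eqxx // | rewrite HP //].
    rewrite IH; auto. rewrite -E Rminus_diag Rplus_0_r.
    destruct (Dl th ga c psi [seq x <- t | P x]); unfold padd, rot, psub; apply pt_eq; simpl; ring.
Qed.

Fixpoint sumL (f : nat -> R) (s : seq nat) : R :=
  match s with [::] => 0 | i :: t => f i + sumL f t end.

Lemma sumL_rem f x t : x \in t -> sumL f t = f x + sumL f (rem x t).
Proof.
  induction t as [|y t IH]; simpl; [by []|].
  rewrite in_cons. case E: (y == x).
  - move/eqP: E => ->. intros _. reflexivity.
  - simpl. intro H. rewrite IH. ring. move: H; by rewrite eq_sym E.
Qed.

Lemma sumL_perm f s : forall t, perm_eq s t -> sumL f s = sumL f t.
Proof.
  induction s as [|x s IH]; intros t H.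
  - have := perm_size H. case: t H => //.
  - have Hx : x \in t by rewrite -(perm_mem H) in_cons eqxx.
    rewrite (sumL_rem f x t Hx). simpl. f_equal. apply IH.
    have H2 := perm_to_rem Hx.
    have : perm_eq (x :: s) (x :: rem x t) by apply: perm_trans H H2.
    by rewrite perm_cons.
Qed.

Lemma SD_sumL th c s : SD th c s = sumL (fun i => th (c (S i)) - th (c i)) s.
Proof. induction s; simpl; auto. rewrite IHs; auto. Qed.

Lemma SD_perm th c s t : perm_eq s t -> SD th c s = SD th c t.
Proof. intro H. rewrite !SD_sumL. by apply sumL_perm. Qed.

Lemma cos_per x (m : Z) : cos (x + 2 * PI * IZR m) = cos x /\ sin (x + 2 * PI * IZR m) = sin x.
Proof.
  destruct (Z_le_gt_dec 0 m) as [H|H].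
  - rewrite -(Z2Nat.id m H) -INR_IZR_INZ.
    replace (x + 2 * PI * INR (Z.to_nat m)) with (x + 2 * INR (Z.to_nat m) * PI) by ring.
    split; [apply cos_period | apply sin_period].
  - have H' : (0 <= - m)%Z by lia.
    set n := Z.to_nat (- m).
    have E : IZR m = - INR n.
    { unfold n. rewrite INR_IZR_INZ Z2Nat.id; auto. rewrite opp_IZR. ring. }
    rewrite E.
    set y := x + 2 * PI * - INR n.
    have Ex : x = y + 2 * INR n * PI by (unfold y; ring).
    split; [rewrite [in RHS]Ex cos_period | rewrite [in RHS]Ex sin_period]; reflexivity.
Qed.

Lemma rot_per x m p : rot (x + 2 * PI * IZR m) p = rot x p.
Proof. unfold rot. destruct (cos_per x m) as [-> ->]. reflexivity. Qed.

Lemma filter_pair (s : seq nat) p q : uniq s -> p \in s -> q \in s -> p != q ->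
  [seq i <- s | (i == p) || (i == q)] =
  if (index q s < index p s)%N then [:: q; p] else [:: p; q].
Proof.
  induction s as [|x t IH]; [by []|].
  simpl. move=> /andP [Hxt Hu] Hp Hq Hpq.
  case: (eqVneq x p) => [E|Exp].
  - subst x. simpl.
    have Hqt : q \in t by move: Hq; rewrite in_cons eq_sym (negbTE Hpq).
    congr (_ :: _).
    rewrite (@eq_in_filter _ _ (pred1 q)); last first.
    { move=> i Hi /=. case: (eqVneq i p) => [E|//]. subst i. by rewrite Hi in Hxt. }
    by rewrite filter_pred1_uniq.
  - case: (eqVneq x q) => [E|Exq].
    + subst x. simpl.
      have Hpt : p \in t by move: Hp; rewrite in_cons eq_sym (negbTE Exp).
      congr (_ :: _).
      rewrite (@eq_in_filter _ _ (pred1 p)); last first.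
      { move=> i Hi /=. case: (eqVneq i q) => [E|]; last by rewrite orbF.
        subst i. by rewrite Hi in Hxt. }
      by rewrite filter_pred1_uniq.
    + simpl. rewrite ltnS.
      have Hpt : p \in t by move: Hp; rewrite in_cons eq_sym (negbTE Exp).
      have Hqt : q \in t by move: Hq; rewrite in_cons eq_sym (negbTE Exq).
      rewrite IH //.
Qed.

Lemma Dl_pair th ga c s p q (m : Z) psi : uniq s -> p \in s -> q \in s -> p != q ->
  (forall i, i \in s -> i != p -> i != q -> c i = c (S i)) ->
  c p = 0 -> c (S p) = c q -> c (S q) = 1 -> th 1 - th 0 = 2 * PI * IZR m ->
  Dl th ga c psi s = rot (psi - th (c (if (index q s < index p s)%N then q else p))) (psub (ga 1) (ga 0)).
Proof.
  intros Hu Hp Hq Hpq Hdeg Hc0 Hc1 Hc2 Hth.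
  rewrite (@Dl_filter th ga c (fun i => (i == p) || (i == q))); last first.
  { intros i Hi. rewrite negb_or => /andP [H1 H2]. by apply Hdeg. }
  rewrite filter_pair //.
  case: ifP => _ /=.
  - rewrite Hc2 Hc0 Hc1.
    replace (psi + (th 1 - th (c q)) - th 0) with (psi - th (c q) + 2 * PI * IZR m) by lra.
    rewrite rot_per.
    destruct (ga 0), (ga 1), (ga (c q)); unfold padd, psub, rot; apply pt_eq; simpl; ring.
  - rewrite Hc2 Hc0 Hc1.
    replace (psi + (th (c q) - th 0) - th (c q)) with (psi - th 0) by ring.
    destruct (ga 0), (ga 1), (ga (c q)); unfold padd, psub, rot; apply pt_eq; simpl; ring.
Qed.

Lemma cyc_list k h (sigma : 'S_k) : (h < k)%N ->
  (forall i : 'I_k, nat_of_ord (sigma i) = ((nat_of_ord i + h) %% k)%N) ->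
  [seq nat_of_ord (sigma j) | j <- enum 'I_k] = iota h (k - h) ++ iota 0 h.
Proof.
  intros Hh Hs.
  have -> : [seq nat_of_ord (sigma j) | j <- enum 'I_k] = [seq ((i + h) %% k)%N | i <- iota 0 k].
  { rewrite -val_enum_ord -map_comp. apply eq_map => i /=. by rewrite Hs. }
  have -> : iota 0 k = iota 0 (k - h) ++ iota (k - h) h by rewrite -iotaD; f_equal; lia.
  rewrite map_cat. f_equal.
  - have -> : iota h (k - h) = [seq (h + i)%N | i <- iota 0 (k - h)] by rewrite -iotaDl addn0.
    apply/eq_in_map => i. rewrite mem_iota => /andP [_ Hi].
    rewrite modn_small; lia.
  - have -> : iota (k - h) h = [seq (k - h + i)%N | i <- iota 0 h] by rewrite -iotaDl addn0.
    rewrite -map_comp.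
    rewrite -{2}(map_id (iota 0 h)). apply/eq_in_map => i. rewrite mem_iota => /andP [_ Hi] /=.
    have -> : (k - h + i + h = k + i)%N by lia.
    rewrite modnDl modn_small //. lia.
Qed.

Lemma cutv0 k C : cutv k C 0 = 0.
Proof. reflexivity. Qed.

Lemma cutvk k C : (0 < k)%N -> cutv k C k = 1.
Proof.
  intro H. unfold cutv. have -> : Nat.eqb k 0 = false by apply Nat.eqb_neq; lia.
  by rewrite Nat.eqb_refl.
Qed.

Lemma cyclic_not_closed gamma theta (m : Z) k (sigma : 'S_k) C :
  gamma 0 <> gamma 1 -> theta 1 - theta 0 = 2 * PI * IZR m -> (0 < k)%N ->
  is_cyclic_shift sigma -> in_int_Dk k C -> ~ closed_C1 (rearr gamma theta sigma C).
Proof.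
  intros Hg Hth Hk [h [Hh Hs]] HC Hcl.
  apply (closed_iff gamma theta k sigma C Hk HC) in Hcl. destruct Hcl as [HD _].
  rewrite (cyc_list k h sigma Hh Hs) Dl_cat !Dl_iota SD_iota in HD.
  have E1 : (h + (k - h) = k)%N by lia.
  rewrite E1 add0n cutv0 (cutvk k C Hk) in HD.
  replace (0 + (theta 1 - theta (cutv k C h)) - theta 0) with (0 - theta (cutv k C h) + 2 * PI * IZR m) in HD by lra.
  rewrite rot_per rot_add_same in HD.
  apply rot_eq0 in HD. apply Hg.
  destruct (gamma 0) as [a b], (gamma 1) as [a' b'], (gamma (cutv k C h)) as [x y].
  unfold padd, psub in HD; simpl in HD. injection HD as H1 H2. f_equal; lra.
Qed.

Definition ordseq k (sigma : 'S_k) : seq nat := [seq nat_of_ord (sigma j) | j <- enum 'I_k].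
Arguments ordseq {k} sigma.

Lemma ordseq_size k (sigma : 'S_k) : size (ordseq sigma) = k.
Proof. by rewrite /ordseq size_map size_enum_ord. Qed.

Lemma ordseq_uniq k (sigma : 'S_k) : uniq (ordseq sigma).
Proof.
  rewrite /ordseq. have -> : [seq nat_of_ord (sigma j) | j <- enum 'I_k] = [seq nat_of_ord i | i <- [seq sigma j | j <- enum 'I_k]].
  { by elim: (enum _) => //= a l ->. }
  rewrite (map_inj_uniq val_inj) (map_inj_uniq (@perm_inj _ sigma)). apply enum_uniq.
Qed.

Lemma ordseq_mem k (sigma : 'S_k) i : (i < k)%N -> i \in ordseq sigma.
Proof.
  intro Hi. rewrite /ordseq. apply/mapP. exists ((sigma^-1)%g (Ordinal Hi)).
  - by rewrite mem_enum.
  - by rewrite permKV.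
Qed.

Lemma ordseq_mem_lt k (sigma : 'S_k) i : i \in ordseq sigma -> (i < k)%N.
Proof. rewrite /ordseq => /mapP [j _ ->]. apply ltn_ord. Qed.

Arguments ordseq_mem {k sigma i}.
Arguments ordseq_mem_lt {k sigma i}.

Lemma ordseq_nth k (sigma : 'S_k) (i : 'I_k) : nth 0%N (ordseq sigma) i = sigma i.
Proof.
  rewrite /ordseq (nth_map i); last by rewrite size_enum_ord.
  by rewrite nth_ord_enum.
Qed.

Lemma nonshift_step k (sigma : 'S_k) : (2 <= k)%N -> ~ is_cyclic_shift sigma ->
  exists j, (j.+1 < k)%N /\ nth 0%N (ordseq sigma) j.+1 <> ((nth 0%N (ordseq sigma) j + 1) %% k)%N.
Proof.
  intros Hk Hn. apply NNPP. intro Hall.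
  set f := nth 0%N (ordseq sigma).
  have Hstep : forall j, (j.+1 < k)%N -> f j.+1 = ((f j + 1) %% k)%N.
  { intros j Hj. destruct (Nat.eq_dec (f j.+1) ((f j + 1) %% k)%N) as [E|E]; auto.
    exfalso; apply Hall; exists j; split; auto. }
  have Hf : forall j, (j < k)%N -> f j = ((f 0 + j) %% k)%N.
  { elim=> [|j IH] Hj.
    - rewrite addn0 modn_small //. rewrite /f. have := mem_nth 0%N (n:=0) (s := ordseq sigma).
      rewrite ordseq_size => H. apply (ordseq_mem_lt (H ltac:(lia))).
    - rewrite Hstep // IH; [|lia]. rewrite modnDml -addnA. f_equal. lia. }
  apply Hn. exists (f 0%N). split.
  - rewrite /f. have := mem_nth 0%N (n:=0) (s := ordseq sigma).
    rewrite ordseq_size => H. apply (ordseq_mem_lt (H ltac:(lia))).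
  - intro i. rewrite -ordseq_nth -/f Hf; [|apply ltn_ord]. by rewrite addnC.
Qed.

Definition eR (s : seq nat) (p q : nat) : R := if (index q s < index p s)%N then 1 else 0.

Lemma triple_ex k (sigma : 'S_k) : (3 <= k)%N -> ~ is_cyclic_shift sigma ->
  exists i1 i2 i3, (i1 < i2)%N /\ (i2 < i3)%N /\ (i3 < k)%N /\
    eR (ordseq sigma) i1 i2 + eR (ordseq sigma) i2 i3 - eR (ordseq sigma) i1 i3 = 1.
Proof.
  intros Hk Hn.
  destruct (@nonshift_step k sigma ltac:(lia) Hn) as [j [Hj Hne]].
  set s := ordseq sigma in Hne *.
  have Hsz : size s = k by apply ordseq_size.
  have Hu : uniq s by apply ordseq_uniq.
  set a := nth 0%N s j in Hne. set b := nth 0%N s j.+1 in Hne.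
  have Ha : (a < k)%N by apply (@ordseq_mem_lt k sigma); apply mem_nth; rewrite Hsz; lia.
  have Hb : (b < k)%N by apply (@ordseq_mem_lt k sigma); apply mem_nth; rewrite Hsz; lia.
  have Pa : index a s = j by apply index_uniq; rewrite ?Hsz; lia || auto.
  have Pb : index b s = j.+1 by apply index_uniq; rewrite ?Hsz; lia || auto.
  have Hab : a <> b by intro E; have := f_equal (fun x => index x s) E; rewrite /= Pa Pb; lia.
  set c := ((a + 1) %% k)%N in Hne.
  have Hc : (c < k)%N by apply ltn_pmod; lia.
  have Hcs : c \in s by apply (@ordseq_mem k sigma).
  set P := index c s.
  have HP : (P < k)%N by rewrite /P -Hsz index_mem.
  have HnP : nth 0%N s P = c by apply nth_index.
  have Hca : c <> a.
  { rewrite /c. case: (ltnP (a + 1) k) => H.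
    - rewrite modn_small //. lia.
    - have -> : (a + 1 = k)%N by lia. rewrite modnn. lia. }
  have HPj : P <> j by intro E; apply Hca; rewrite -HnP E.
  have HPj1 : P <> j.+1 by intro E; apply Hne; rewrite -HnP E.
  rewrite /eR.
  case: (ltnP (a + 1) k) => Ha1.
  - have Ec : c = (a + 1)%N by rewrite /c modn_small.
    case: (ltnP (a + 1) b) => Hab1.
    + exists a, (a + 1)%N, b. split; [lia|split; [lia|split; [lia|]]].
      rewrite -Ec Pa Pb -/P.
      case: (ltnP P j) => H1; case: (ltnP j.+1 P) => H2; case: (ltnP j.+1 j) => H3; try lia; lra.
    + have Hba : (b < a)%N.
      { have : b <> (a + 1)%N by rewrite -Ec. lia. }
      exists b, a, (a + 1)%N. split; [lia|split; [lia|split; [lia|]]].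
      rewrite -Ec Pa Pb -/P.
      case: (ltnP j j.+1) => H1; case: (ltnP P j) => H2; case: (ltnP P j.+1) => H3; try lia; lra.
  - have Ea : a = (k - 1)%N by lia.
    have Ec : c = 0%N by rewrite /c Ea (_ : (k - 1 + 1 = k)%N) ?modnn //; lia.
    have Hb0 : b <> 0%N by intro E; apply Hne; rewrite E Ec.
    exists 0%N, b, a. split; [lia|split; [lia|split; [lia|]]].
    rewrite -Ec Pa Pb -/P.
    case: (ltnP j.+1 P) => H1; case: (ltnP j j.+1) => H2; case: (ltnP j P) => H3; try lia; lra.
Qed.

Lemma ball_R (x e y : R) : ball x e y <-> Rabs (y - x) < e.
Proof. reflexivity. Qed.

Lemma cont_of_eps (f : R -> R) x :
  (forall e, 0 < e -> exists d, 0 < d /\ forall y, Rabs (y - x) < d -> Rabs (f y - f x) < e) ->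
  continuous f x.
Proof.
  intro H. apply filterlim_locally. intro eps.
  destruct (H eps (cond_pos eps)) as [d [Hd Hf]].
  exists (mkposreal d Hd). intros y Hy. apply ball_R. apply Hf. apply ball_R in Hy. exact Hy.
Qed.

Definition Ct (f : R * R -> R) := forall p, continuous f p.

Lemma Ct_eps f : Ct f -> forall p e, 0 < e -> exists d, 0 < d /\
  forall q, Rabs (fst q - fst p) < d -> Rabs (snd q - snd p) < d -> Rabs (f q - f p) < e.
Proof.
  intros Hf p e He. have := Hf p. move/filterlim_locally => /(_ (mkposreal e He)) [d Hd].
  exists d. split; [apply cond_pos|]. intros q H1 H2. apply ball_R. apply Hd. split; apply ball_R; auto.
Qed.

Lemma Ct_const c : Ct (fun _ => c).
Proof. intro p. apply continuous_const. Qed.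
Lemma Ct_fst : Ct (fun p => fst p).
Proof. intros [x y]. apply continuous_fst. Qed.
Lemma Ct_snd : Ct (fun p => snd p).
Proof. intros [x y]. apply continuous_snd. Qed.
Lemma Ct_plus f g : Ct f -> Ct g -> Ct (fun p => f p + g p).
Proof. intros Hf Hg p. apply (continuous_plus f g); auto. Qed.
Lemma Ct_mult f g : Ct f -> Ct g -> Ct (fun p => f p * g p).
Proof. intros Hf Hg p. apply (continuous_mult f g); auto. Qed.
Lemma Ct_opp f : Ct f -> Ct (fun p => - f p).
Proof. intros Hf p. apply (continuous_opp f); auto. Qed.
Lemma Ct_minus f g : Ct f -> Ct g -> Ct (fun p => f p - g p).
Proof. intros Hf Hg p. apply (continuous_minus f g); auto. Qed.
Lemma Ct_comp (g : R -> R) f : (forall x, continuous g x) -> Ct f -> Ct (fun p => g (f p)).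
Proof. intros Hg Hf p. apply (continuous_comp f g); auto. Qed.
Lemma Ct_div_const f c : Ct f -> Ct (fun p => f p / c).
Proof. intros Hf. unfold Rdiv. apply Ct_mult; auto. apply Ct_const. Qed.

Lemma cont_cos x : continuous cos x.
Proof. apply continuous_cos. Qed.
Lemma cont_sin x : continuous sin x.
Proof. apply continuous_sin. Qed.

Definition clamp (x : R) := Rmax 0 (Rmin 1 x).

Lemma clamp_in x : 0 <= clamp x <= 1.
Proof. unfold clamp, Rmax, Rmin. repeat destruct Rle_dec; lra. Qed.

Lemma clamp_id x : 0 <= x <= 1 -> clamp x = x.
Proof. unfold clamp, Rmax, Rmin. repeat destruct Rle_dec; lra. Qed.

Lemma clamp_lip x y : Rabs (clamp y - clamp x) <= Rabs (y - x).
Proof.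
  unfold clamp, Rmax, Rmin. unfold Rabs. repeat destruct Rle_dec; repeat destruct Rcase_abs; lra.
Qed.

Lemma cont_clamp (f : R -> R) : (forall s, 0 <= s <= 1 -> cont01 f s) ->
  forall x, continuous (fun y => f (clamp y)) x.
Proof.
  intros Hf x. apply cont_of_eps. intros e He.
  destruct (Hf (clamp x) (clamp_in x) e He) as [d [Hd H]].
  exists d. split; auto. intros y Hy. apply H. apply clamp_in.
  have := clamp_lip x y. lra.
Qed.

Lemma deriv_cont (f : R -> R) s l : deriv01 f s l -> cont01 f s.
Proof.
  intros Hd e He.
  destruct (Hd 1 Rlt_0_1) as [d [Hd0 H]].
  exists (Rmin d (e / (Rabs l + 1))). split.
  { apply Rmin_pos; auto. apply Rdiv_lt_0_compat; auto. have := Rabs_pos l. lra. }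
  intros t Ht Hts.
  destruct (Req_dec t s) as [E|E].
  { subst t. rewrite Rminus_diag Rabs_R0. auto. }
  have Hts1 : Rabs (t - s) < d by (have := Rmin_l d (e / (Rabs l + 1)); lra).
  have Hts2 : Rabs (t - s) < e / (Rabs l + 1) by (have := Rmin_r d (e / (Rabs l + 1)); lra).
  have Hq := H t Ht E Hts1.
  have Hne : t - s <> 0 by lra.
  have Eq : f t - f s = ((f t - f s) / (t - s)) * (t - s) by field.
  rewrite Eq Rabs_mult.
  have Hb : Rabs ((f t - f s) / (t - s)) < Rabs l + 1.
  { have := Rabs_triang_inv ((f t - f s) / (t - s)) l. lra. }
  have Hpos : 0 < Rabs l + 1 by (have := Rabs_pos l; lra).
  have Hts3 : Rabs (t - s) * (Rabs l + 1) < e.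
  { apply (Rmult_lt_compat_r (Rabs l + 1)) in Hts2; auto.
    unfold Rdiv in Hts2. rewrite Rmult_assoc Rinv_l in Hts2; lra. }
  have := Rabs_pos ((f t - f s) / (t - s)). have := Rabs_pos (t - s). nra.
Qed.

Lemma Ct_Dl th ga (c : R * R -> nat -> R) s :
  (forall x, continuous th x) -> (forall x, continuous (fun y => fst (ga y)) x) ->
  (forall x, continuous (fun y => snd (ga y)) x) -> (forall i, Ct (fun p => c p i)) ->
  forall psi, Ct psi ->
  Ct (fun p => fst (Dl th ga (c p) (psi p) s)) /\ Ct (fun p => snd (Dl th ga (c p) (psi p) s)).
Proof.
  intros Hth H1 H2 Hc. induction s as [|i t IH]; intros psi Hpsi.
  - simpl. split; apply Ct_const.
  - have Hpsi' : Ct (fun p => psi p + (th (c p i.+1) - th (c p i))).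
    { apply Ct_plus; auto. apply Ct_minus; apply Ct_comp; auto. }
    destruct (IH _ Hpsi') as [IH1 IH2].
    have Ha : Ct (fun p => psi p - th (c p i)) by apply Ct_minus; auto; apply Ct_comp; auto.
    have Hc1 : Ct (fun p => cos (psi p - th (c p i))) by apply (Ct_comp cos); [apply cont_cos|].
    have Hs1 : Ct (fun p => sin (psi p - th (c p i))) by apply (Ct_comp sin); [apply cont_sin|].
    have Hg1 : Ct (fun p => fst (ga (c p i.+1)) - fst (ga (c p i))).
    { apply Ct_minus; apply (Ct_comp (fun y => fst (ga y))); auto. }
    have Hg2 : Ct (fun p => snd (ga (c p i.+1)) - snd (ga (c p i))).
    { apply Ct_minus; apply (Ct_comp (fun y => snd (ga y))); auto. }
    simpl. split.
    + apply Ct_plus; [apply Ct_minus; apply Ct_mult; auto | exact IH1].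
    + apply Ct_plus; [apply Ct_plus; apply Ct_mult; auto | exact IH2].
Qed.

Section Fam.
Variables (k i1 i2 i3 : nat).
Hypothesis H12 : (i1 < i2)%N.
Hypothesis H23 : (i2 < i3)%N.
Hypothesis H3k : (i3 < k)%N.

Definition wf (u v : R) := (u * v) * (v * (1 - u)) * (1 - v) / INR k.

Definition Cf (u v : R) (i : nat) : R :=
  if (i <= i1)%N then INR i * wf u v
  else if (i <= i2)%N then u * v + (INR i - INR i1 - 1) * wf u v
  else if (i <= i3)%N then u * v + v * (1 - u) + (INR i - INR i2 - 1) * wf u v
  else 1 - (INR k - INR i) * wf u v.

Definition Cz (u v : R) (i : nat) : R :=
  if (i <= i1)%N then 0
  else if (i <= i2)%N then u * v
  else if (i <= i3)%N then u * v + v * (1 - u)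
  else 1.

Lemma Cf_cont i : Ct (fun p => Cf (fst p) (snd p) i).
Proof.
  have Hw : Ct (fun p => wf (fst p) (snd p)).
  { unfold wf. apply Ct_div_const. repeat apply Ct_mult; try apply Ct_minus;
    try apply Ct_fst; try apply Ct_snd; try apply Ct_const. }
  unfold Cf. destruct (i <= i1)%N; [|destruct (i <= i2)%N; [|destruct (i <= i3)%N]].
  - apply Ct_mult; auto; apply Ct_const.
  - apply Ct_plus; [apply Ct_mult; [apply Ct_fst|apply Ct_snd]|apply Ct_mult; auto; apply Ct_const].
  - apply Ct_plus; [apply Ct_plus|apply Ct_mult; auto; apply Ct_const].
    apply Ct_mult; [apply Ct_fst|apply Ct_snd].
    apply Ct_mult; [apply Ct_snd|apply Ct_minus; [apply Ct_const|apply Ct_fst]].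
  - apply Ct_minus; [apply Ct_const|apply Ct_mult; auto; apply Ct_const].
Qed.

Lemma Cf_0 u v : Cf u v 0 = 0.
Proof. unfold Cf. simpl. ring. Qed.

Lemma Cf_k u v : Cf u v k = 1.
Proof.
  unfold Cf. have -> : (k <= i1)%N = false by apply/negbTE; rewrite -ltnNge; lia.
  have -> : (k <= i2)%N = false by apply/negbTE; rewrite -ltnNge; lia.
  have -> : (k <= i3)%N = false by apply/negbTE; rewrite -ltnNge; lia.
  ring.
Qed.

Lemma cutv_Cf u v : cutv k (Cf u v) = Cf u v.
Proof.
  apply functional_extensionality => i. unfold cutv.
  destruct (Nat.eqb_spec i 0) as [E|E]; [subst; by rewrite Cf_0|].
  destruct (Nat.eqb_spec i k) as [E'|E']; [subst; by rewrite Cf_k|]. reflexivity.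
Qed.

Lemma Cf_w0 u v : wf u v = 0 -> forall i, Cf u v i = Cz u v i.
Proof. intros W i. unfold Cf, Cz. rewrite W. repeat case: ifP => _; ring. Qed.

Lemma Cf_step u v i : (i < k)%N ->
  Cf u v (S i) - Cf u v i = wf u v \/
  Cf u v (S i) - Cf u v i = u * v - INR i1 * wf u v \/
  Cf u v (S i) - Cf u v i = v * (1 - u) - (INR i2 - INR i1 - 1) * wf u v \/
  Cf u v (S i) - Cf u v i = (1 - v) - (INR k - INR i2 - 2) * wf u v.
Proof.
  intros Hi. unfold Cf. rewrite S_INR.
  case: (ltnP i i1) => Ha.
  - try (have -> : (i.+1 <= i1)%N by lia). try (have -> : (i <= i1)%N by lia). left; ring.
  - case: (eqVneq i i1) => [E|Ne].
    + subst i. rewrite ?leqnn. try (have -> : (i1.+1 <= i1)%N = false by lia).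
      try (have -> : (i1.+1 <= i2)%N by lia). right; left; ring.
    + try (have -> : (i.+1 <= i1)%N = false by lia). try (have -> : (i <= i1)%N = false by lia).
      case: (ltnP i i2) => Hb.
      * try (have -> : (i.+1 <= i2)%N by lia). try (have -> : (i <= i2)%N by lia). left; ring.
      * case: (eqVneq i i2) => [E|Ne2].
        -- subst i. rewrite ?leqnn. try (have -> : (i2.+1 <= i2)%N = false by lia).
           try (have -> : (i2.+1 <= i3)%N by lia). right; right; left; ring.
        -- try (have -> : (i.+1 <= i2)%N = false by lia). try (have -> : (i <= i2)%N = false by lia).
           case: (ltnP i i3) => Hc.
           ++ try (have -> : (i.+1 <= i3)%N by lia). try (have -> : (i <= i3)%N by lia). left; ring.
           ++ case: (eqVneq i i3) => [E|Ne3].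
              ** subst i. rewrite ?leqnn. try (have -> : (i3.+1 <= i3)%N = false by lia).
                 right; right; right. ring.
              ** try (have -> : (i.+1 <= i3)%N = false by lia). try (have -> : (i <= i3)%N = false by lia).
                 left; ring.
Qed.

Lemma pos_lem X Y Z n K : 0 <= X -> 0 <= Y <= 1 -> 0 <= Z <= 1 -> 0 <= n -> n + 1 <= K ->
  0 <= X - n * (X * Y * Z / K) /\ (0 < X -> 0 < X - n * (X * Y * Z / K)).
Proof.
  intros HX HY HZ Hn HK.
  have HK0 : 0 < K by lra.
  have HYZ : 0 <= Y * Z <= 1 by split; nra.
  have E : X - n * (X * Y * Z / K) = X * (K - n * (Y * Z)) / K by field; lra.
  rewrite E. have Hm : 0 < K - n * (Y * Z) by nra.
  split.
  - apply Rdiv_le_0_compat; auto. nra.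
  - intro HX'. apply Rdiv_lt_0_compat; auto. nra.
Qed.

Lemma INR_le_lt a b : (a < b)%N -> INR a + 1 <= INR b.
Proof. intro H. rewrite -S_INR. apply le_INR. lia. Qed.

Lemma Cf_mono u v i : 0 <= u <= 1 -> 0 <= v <= 1 -> (i < k)%N ->
  0 <= Cf u v (S i) - Cf u v i /\ (0 < u < 1 -> 0 < v < 1 -> 0 < Cf u v (S i) - Cf u v i).
Proof.
  intros Hu Hv Hi.
  have Hk : 0 < INR k by apply lt_0_INR; lia.
  have Hi1 : INR i1 + 1 <= INR i2 by apply INR_le_lt.
  have Hi2 : INR i2 + 1 <= INR i3 by apply INR_le_lt.
  have Hi3 : INR i3 + 1 <= INR k by apply INR_le_lt.
  have Hi0 : 0 <= INR i1 by apply pos_INR.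
  have HA : 0 <= u * v <= 1 by split; nra.
  have HB : 0 <= v * (1 - u) <= 1 by split; nra.
  have HC : 0 <= 1 - v <= 1 by lra.
  have Hw : 0 <= wf u v.
  { unfold wf. apply Rdiv_le_0_compat; auto. repeat apply Rmult_le_pos; lra. }
  destruct (Cf_step u v i Hi) as [E|[E|[E|E]]]; rewrite E.
  - split; auto. intros Hu' Hv'. unfold wf. apply Rdiv_lt_0_compat; auto.
    repeat apply Rmult_lt_0_compat; nra.
  - unfold wf. destruct (pos_lem (u*v) (v * (1-u)) (1 - v) (INR i1) (INR k)) as [P1 P2]; try lra.
    all: try (split; auto; intros; apply P2; nra).
  - unfold wf. replace (u * v * (v * (1 - u)) * (1 - v)) with (v * (1 - u) * (u * v) * (1 - v)) by ring.
    destruct (pos_lem (v * (1-u)) (u * v) (1 - v) (INR i2 - INR i1 - 1) (INR k)) as [P1 P2]; try lra.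
    all: try (split; auto; intros; apply P2; nra).
  - unfold wf. replace (u * v * (v * (1 - u)) * (1 - v)) with ((1 - v) * (u * v) * (v * (1 - u))) by ring.
    destruct (pos_lem (1 - v) (u * v) (v * (1 - u)) (INR k - INR i2 - 2) (INR k)) as [P1 P2]; try lra.
    all: try (split; auto; intros; apply P2; nra).
Qed.

Lemma Cf_int u v : 0 < u < 1 -> 0 < v < 1 -> in_int_Dk k (Cf u v).
Proof.
  intros Hu Hv i Hi. rewrite cutv_Cf.
  destruct (@Cf_mono u v i ltac:(lra) ltac:(lra) Hi) as [_ P]. have := P Hu Hv. lra.
Qed.

Lemma Cf_range u v i : 0 <= u <= 1 -> 0 <= v <= 1 -> (i <= k)%N -> 0 <= Cf u v i <= 1.
Proof.
  intros Hu Hv Hi.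
  have Up : forall j, (j <= k)%N -> 0 <= Cf u v j.
  { elim=> [|j IH] Hj. rewrite Cf_0; lra.
    have := IH ltac:(lia). destruct (@Cf_mono u v j Hu Hv ltac:(lia)) as [P _]. lra. }
  have Dn : forall n, (n <= k)%N -> Cf u v (k - n)%N <= 1.
  { elim=> [|n IH] Hn. rewrite subn0 Cf_k; lra.
    have := IH ltac:(lia). destruct (@Cf_mono u v (k - n.+1)%N Hu Hv ltac:(lia)) as [P _].
    have E : ((k - n.+1).+1 = k - n)%N by lia. rewrite E in P. lra. }
  split; auto. have := Dn (k - i)%N ltac:(lia). have -> : (k - (k - i) = i)%N by lia. auto.
Qed.

Lemma Cz_deg u v i : i <> i1 -> i <> i2 -> i <> i3 -> Cz u v i = Cz u v (S i).
Proof.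
  intros N1 N2 N3. unfold Cz.
  case: (ltnP i i1) => Ha.
  - try (have -> : (i <= i1)%N by lia). done.
  - try (have -> : (i <= i1)%N = false by lia). try (have -> : (i.+1 <= i1)%N = false by lia).
    case: (ltnP i i2) => Hb.
    + try (have -> : (i <= i2)%N by lia). done.
    + try (have -> : (i <= i2)%N = false by lia). try (have -> : (i.+1 <= i2)%N = false by lia).
      case: (ltnP i i3) => Hc.
      * try (have -> : (i <= i3)%N by lia). done.
      * try (have -> : (i <= i3)%N = false by lia). try (have -> : (i.+1 <= i3)%N = false by lia). done.
Qed.

Lemma Cz_i1 u v : Cz u v i1 = 0.
Proof. by rewrite /Cz leqnn. Qed.
Lemma Cz_i1S u v : Cz u v (S i1) = u * v.
Proof. rewrite /Cz. have -> : (i1.+1 <= i1)%N = false by lia. by have -> : (i1.+1 <= i2)%N by lia. Qed.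
Lemma Cz_i2 u v : Cz u v i2 = u * v.
Proof. rewrite /Cz. have -> : (i2 <= i1)%N = false by lia. by rewrite leqnn. Qed.
Lemma Cz_i2S u v : Cz u v (S i2) = u * v + v * (1 - u).
Proof.
  rewrite /Cz. have -> : (i2.+1 <= i1)%N = false by lia. have -> : (i2.+1 <= i2)%N = false by lia.
  by have -> : (i2.+1 <= i3)%N by lia.
Qed.
Lemma Cz_i3 u v : Cz u v i3 = u * v + v * (1 - u).
Proof.
  rewrite /Cz. have -> : (i3 <= i1)%N = false by lia. have -> : (i3 <= i2)%N = false by lia.
  by rewrite leqnn.
Qed.
Lemma Cz_i3S u v : Cz u v (S i3) = 1.
Proof.
  rewrite /Cz. have -> : (i3.+1 <= i1)%N = false by lia. have -> : (i3.+1 <= i2)%N = false by lia.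
  by have -> : (i3.+1 <= i3)%N = false by lia.
Qed.

End Fam.

Lemma Dl_ext th th' ga ga' c psi s :
  (forall i, i \in s -> th (c i) = th' (c i) /\ th (c (S i)) = th' (c (S i)) /\
                        ga (c i) = ga' (c i) /\ ga (c (S i)) = ga' (c (S i))) ->
  Dl th ga c psi s = Dl th' ga' c psi s.
Proof.
  elim: s psi => [|i t IH] psi H //=.
  have [E1 [E2 [E3 E4]]] := H i (mem_head _ _).
  rewrite E1 E2 E3 E4 IH //. intros j Hj. apply H. by rewrite in_cons Hj orbT.
Qed.

Lemma Ct_cont2 (F : R -> R -> pt2) :
  Ct (fun p => fst (F (fst p) (snd p))) -> Ct (fun p => snd (F (fst p) (snd p))) ->
  forall u v, cont2 F u v.
Proof.
  intros H1 H2 u v e He.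
  destruct (Ct_eps _ H1 (u, v) e He) as [d1 [Hd1 P1]].
  destruct (Ct_eps _ H2 (u, v) e He) as [d2 [Hd2 P2]].
  exists (Rmin d1 d2). split; [apply Rmin_pos; auto|].
  intros u' v' _ _ E1 E2.
  have := Rmin_l d1 d2. have := Rmin_r d1 d2. intros M2 M1.
  split; [apply (P1 (u', v')) | apply (P2 (u', v'))]; simpl; lra.
Qed.

Lemma cont_cont01 (g : R -> R) s : (forall x, continuous g x) -> cont01 g s.
Proof.
  intros Hg e He. have := Hg s. move/filterlim_locally => /(_ (mkposreal e He)) [d Hd].
  exists d. split; [apply cond_pos|]. intros t _ Ht. apply ball_R. apply Hd. apply ball_R. exact Ht.
Qed.

Lemma cont_edge (th : R -> R) (e : R) : (forall x, continuous th x) ->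
  forall x, continuous (fun u => - th (u * e)) x.
Proof.
  intros Hth x. apply (continuous_opp (fun u => th (u * e))).
  apply (continuous_comp (fun u => u * e) th); auto.
  apply (continuous_mult (fun u => u) (fun _ => e)); [apply continuous_id | apply continuous_const].
Qed.

Arguments triple_ex {k sigma}.
Arguments Cf_int {k i1 i2 i3}.
Arguments Cf_range {k i1 i2 i3}.
Arguments cutv_Cf {k i1 i2 i3}.
Arguments Cz_deg {k i1 i2 i3}.
Arguments Cz_i1S {k i1 i2 i3}.
Arguments Cz_i2 {k i1 i2 i3}.
Arguments Cz_i2S {k i1 i2 i3}.
Arguments Cz_i3 {k i1 i2 i3}.
Arguments Cz_i3S {k i1 i2 i3}.

Ltac fin_edge := rewrite Rminus_0_l; f_equal; f_equal; ring.

Lemma eR_01 s p q : eR s p q = 0 \/ eR s p q = 1.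
Proof. unfold eR. case: ifP => _; [right|left]; reflexivity. Qed.

Theorem exists_closed (gamma : R -> pt2) (theta : R -> R) (m : Z)
  (k : nat) (sigma : 'S_k) :
  (forall s, 0 <= s <= 1 ->
     cont01 theta s /\
     cont01 (fun t => fst (gamma t)) s /\
     cont01 (fun t => snd (gamma t)) s) ->
  gamma 0 <> gamma 1 ->
  theta 1 - theta 0 = 2 * PI * IZR m ->
  m <> 0%Z ->
  (3 <= k)%N -> ~ is_cyclic_shift sigma ->
  exists C : nat -> R, in_int_Dk k C /\ closed_C1 (rearr gamma theta sigma C).
Proof.
  intros Hreg Hne Hth Hm Hk3 Hnc.
  apply NNPP. intro Hno.
  destruct (triple_ex Hk3 Hnc) as [i1 [i2 [i3 [H12 [H23 [H3k He]]]]]].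
  set s := ordseq sigma in He.
  have Hsu : uniq s by apply ordseq_uniq.
  have Hsm : forall i, i \in s -> (i < k)%N by intros i Hi; apply (@ordseq_mem_lt k sigma).
  have Hsm' : forall i, (i < k)%N -> i \in s by intros i Hi; apply (@ordseq_mem k sigma).
  pose thc := fun x => theta (clamp x).
  pose gac := fun x => gamma (clamp x).
  have Cth : forall x, continuous thc x.
  { apply cont_clamp. intros; apply Hreg; auto. }
  have Cg1 : forall x, continuous (fun y => fst (gac y)) x.
  { apply (cont_clamp (fun t => fst (gamma t))). intros; apply Hreg; auto. }
  have Cg2 : forall x, continuous (fun y => snd (gac y)) x.
  { apply (cont_clamp (fun t => snd (gamma t))). intros; apply Hreg; auto. }
  have c0 : clamp 0 = 0 by apply clamp_id; lra.
  have c1 : clamp 1 = 1 by apply clamp_id; lra.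
  have Hthc : thc 1 - thc 0 = 2 * PI * IZR m by rewrite /thc c0 c1.
  pose G := fun u v => Dl thc gac (Cf k i1 i2 i3 u v) 0 s.
  pose V := psub (gamma 1) (gamma 0).
  have HV : V <> (0,0).
  { intro E. apply Hne. unfold V, psub in E. destruct (gamma 0), (gamma 1). simpl in E.
    injection E as E1 E2. f_equal; lra. }
  have HgV : psub (gac 1) (gac 0) = V by rewrite /gac /V c0 c1.
  have KR : forall u v, in01 u -> in01 v -> Dl theta gamma (Cf k i1 i2 i3 u v) 0 s = G u v.
  { intros u v Hu Hv. apply Dl_ext. intros i Hi. have := Hsm i Hi => Hik.
    have R1 := Cf_range H12 H23 H3k u v i Hu Hv (ltnW Hik).
    have R2 := Cf_range H12 H23 H3k u v (S i) Hu Hv Hik.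
    rewrite /thc /gac !clamp_id //. }
  have HSD : forall C, SD theta (cutv k C) s = theta 1 - theta 0.
  { intro C. rewrite (@SD_perm theta (cutv k C) s (seq.iota 0 k)).
    - rewrite SD_iota add0n cutv0 cutvk //. lia.
    - apply uniq_perm; auto. apply seq.iota_uniq. intro i. rewrite mem_iota add0n.
      case E: (i \in s). symmetry; have := Hsm i E; lia.
      symmetry. apply/negbTE. apply/negP => Hi. have := Hsm' i ltac:(lia). by rewrite E. }
  have Wedge : forall u v, (u = 0 \/ u = 1 \/ v = 0 \/ v = 1) -> wf k u v = 0.
  { intros u v [E|[E|[E|E]]]; subst; unfold wf, Rdiv; ring. }
  have GC : forall u v, (u = 0 \/ u = 1 \/ v = 0 \/ v = 1) -> G u v = Dl thc gac (Cz i1 i2 i3 u v) 0 s.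
  { intros u v Hb. unfold G. f_equal. apply functional_extensionality => i. apply Cf_w0. auto. }
  have N1 : i1 != i2 by apply/eqP; lia.
  have N2 : i2 != i3 by apply/eqP; lia.
  have N3 : i1 != i3 by apply/eqP; lia.
  have Hi1 : i1 \in s by apply Hsm'; lia.
  have Hi2 : i2 \in s by apply Hsm'; lia.
  have Hi3 : i3 \in s by apply Hsm'; lia.
  have Eb : forall u, in01 u -> G u 0 = rot (- thc (u * 0)) V.
  { intros u Hu. rewrite GC; [|auto]. rewrite (@Dl_pair thc gac _ s i1 i3 m 0) //.
    - rewrite HgV Rmult_0_r. f_equal. case: ifP => _; rewrite ?Cz_i1 ?(Cz_i3 H12 H23 H3k); fin_edge.
    - intros i Hi Hp Hq. case: (eqVneq i i2) => [->|Hr].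
      + rewrite (Cz_i2 H12 H23 H3k) (Cz_i2S H12 H23 H3k). ring.
      + apply (Cz_deg H12 H23 H3k); apply/eqP; auto.
    - apply Cz_i1.
    - rewrite (Cz_i1S H12 H23 H3k) (Cz_i3 H12 H23 H3k). ring.
    - apply (Cz_i3S H12 H23 H3k). }
  have Et : forall u, in01 u -> G u 1 = rot (- thc (u * eR s i1 i2)) V.
  { intros u Hu. rewrite GC; [|auto]. rewrite (@Dl_pair thc gac _ s i1 i2 m 0) //.
    - rewrite HgV. f_equal. unfold eR. case: ifP => _; rewrite ?Cz_i1 ?(Cz_i2 H12 H23 H3k); fin_edge.
    - intros i Hi Hp Hq. case: (eqVneq i i3) => [->|Hr].
      + rewrite (Cz_i3 H12 H23 H3k) (Cz_i3S H12 H23 H3k). ring.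
      + apply (Cz_deg H12 H23 H3k); apply/eqP; auto.
    - apply Cz_i1.
    - rewrite (Cz_i1S H12 H23 H3k) (Cz_i2 H12 H23 H3k). ring.
    - rewrite (Cz_i2S H12 H23 H3k). ring. }
  have El : forall v, in01 v -> G 0 v = rot (- thc (v * eR s i2 i3)) V.
  { intros v Hv. rewrite GC; [|auto]. rewrite (@Dl_pair thc gac _ s i2 i3 m 0) //.
    - rewrite HgV. f_equal. unfold eR. case: ifP => _; rewrite ?(Cz_i2 H12 H23 H3k) ?(Cz_i3 H12 H23 H3k); fin_edge.
    - intros i Hi Hp Hq. case: (eqVneq i i1) => [->|Hr].
      + rewrite Cz_i1 (Cz_i1S H12 H23 H3k). ring.
      + apply (Cz_deg H12 H23 H3k); apply/eqP; auto.
    - rewrite (Cz_i2 H12 H23 H3k). ring.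
    - rewrite (Cz_i2S H12 H23 H3k) (Cz_i3 H12 H23 H3k). ring.
    - apply (Cz_i3S H12 H23 H3k). }
  have Er : forall v, in01 v -> G 1 v = rot (- thc (v * eR s i1 i3)) V.
  { intros v Hv. rewrite GC; [|auto]. rewrite (@Dl_pair thc gac _ s i1 i3 m 0) //.
    - rewrite HgV. f_equal. unfold eR. case: ifP => _; rewrite ?Cz_i1 ?(Cz_i3 H12 H23 H3k); fin_edge.
    - intros i Hi Hp Hq. case: (eqVneq i i2) => [->|Hr].
      + rewrite (Cz_i2 H12 H23 H3k) (Cz_i2S H12 H23 H3k). ring.
      + apply (Cz_deg H12 H23 H3k); apply/eqP; auto.
    - apply Cz_i1.
    - rewrite (Cz_i1S H12 H23 H3k) (Cz_i3 H12 H23 H3k). ring.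
    - apply (Cz_i3S H12 H23 H3k). }
  have T := @TL G (fun u => - thc (u * 0)) (fun u => - thc (u * eR s i1 i2))
                  (fun v => - thc (v * eR s i2 i3)) (fun v => - thc (v * eR s i1 i3)) V HV.
  have Fin : forall e, (e = 0 \/ e = 1) -> thc (1 * e) - thc (0 * e) = e * (2 * PI * IZR m).
  { intros e [ E | E ]; rewrite E. rewrite !Rmult_0_r; ring. rewrite Rmult_1_l Rmult_0_l Hthc; ring. }
  have Hcont : forall u v, in01 u -> in01 v -> cont2 G u v.
  { intros u v _ _. apply Ct_cont2.
    - destruct (@Ct_Dl thc gac (fun p => Cf k i1 i2 i3 (fst p) (snd p)) s Cth Cg1 Cg2
                 (fun i => Cf_cont k i1 i2 i3 i) (fun _ => 0) (Ct_const 0)) as [P1 P2]. exact P1.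
    - destruct (@Ct_Dl thc gac (fun p => Cf k i1 i2 i3 (fst p) (snd p)) s Cth Cg1 Cg2
                 (fun i => Cf_cont k i1 i2 i3 i) (fun _ => 0) (Ct_const 0)) as [P1 P2]. exact P2. }
  have Hnz : forall u v, in01 u -> in01 v -> G u v <> (0,0).
  { intros u v Hu Hv E.
    destruct (classic (0 < u < 1 /\ 0 < v < 1)) as [[Hu' Hv']|Hb].
    - apply Hno. exists (Cf k i1 i2 i3 u v). split; [apply (Cf_int H12 H23 H3k); auto|].
      apply (closed_iff gamma theta k sigma _ ltac:(lia) (Cf_int H12 H23 H3k u v Hu' Hv')).
      rewrite (cutv_Cf H12 H23 H3k) -/(ordseq sigma) -/s KR // E. split; auto.
      rewrite -(cutv_Cf H12 H23 H3k u v) HSD Hth.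
      destruct (cos_per 0 m) as [A1 A2]. rewrite Rplus_0_l in A1 A2. split; auto.
    - have Hb' : u = 0 \/ u = 1 \/ v = 0 \/ v = 1.
      { unfold in01 in *. destruct (Req_dec u 0); auto. destruct (Req_dec u 1); auto.
        destruct (Req_dec v 0); auto. destruct (Req_dec v 1); auto.
        exfalso; apply Hb; lra. }
      destruct Hb' as [ E0 | [ E0 | [ E0 | E0 ] ] ]; rewrite E0 in E.
      + rewrite El in E; auto. apply HV. by apply rot_eq0 in E.
      + rewrite Er in E; auto. apply HV. by apply rot_eq0 in E.
      + rewrite Eb in E; auto. apply HV. by apply rot_eq0 in E.
      + rewrite Et in E; auto. apply HV. by apply rot_eq0 in E. }
  have Hec : forall s0, in01 s0 -> cont01 (fun u => - thc (u * 0)) s0 /\ cont01 (fun u => - thc (u * eR s i1 i2)) s0 /\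
                                cont01 (fun v => - thc (v * eR s i2 i3)) s0 /\ cont01 (fun v => - thc (v * eR s i1 i3)) s0.
  { intros s0 _. repeat split; apply cont_cont01; apply cont_edge; auto. }
  have := T Hcont Hnz Hec Eb Et El Er.
  have F12 := Fin _ (eR_01 s i1 i2). have F23 := Fin _ (eR_01 s i2 i3). have F13 := Fin _ (eR_01 s i1 i3).
  have F0 := Fin 0 (or_introl erefl).
  intro Z.
  have : 2 * PI * IZR m * (eR s i1 i2 + eR s i2 i3 - eR s i1 i3) = 0 by nra.
  rewrite He Rmult_1_r. intro Z2.
  have HP := PI_RGT_0.
  have : IZR m = 0 by nra.
  intro Z3. apply Hm. by apply eq_IZR_R0.
Qed.

Theorem theorem4p1 (gamma : R -> pt2) (theta : R -> R) (c : R) (m : Z)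
  (k : nat) (sigma : 'S_k) :
  0 < c ->
  (forall s, 0 <= s <= 1 ->
     cont01 theta s /\
     deriv01 (fun t => fst (gamma t)) s (c * cos (theta s)) /\
     deriv01 (fun t => snd (gamma t)) s (c * sin (theta s))) ->
  gamma 0 <> gamma 1 ->
  theta 1 - theta 0 = 2 * PI * IZR m ->
  m <> 0%Z ->
  (3 <= k)%nat ->
  ((exists C : nat -> R, in_int_Dk k C /\ closed_C1 (rearr gamma theta sigma C))
   <-> ~ is_cyclic_shift sigma).
Proof.
  intros Hc Hreg Hne Hth Hm Hk.
  split.
  - intros [C [HC Hcl]] Hcyc.
    exact (cyclic_not_closed gamma theta m k sigma C Hne Hth ltac:(lia) Hcyc HC Hcl).
  - intro Hnc. apply (exists_closed gamma theta m k sigma); auto.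
    intros s Hs. destruct (Hreg s Hs) as [H1 [H2 H3]].
    split; [exact H1|split]; eapply deriv_cont; eauto.
Qed.
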